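(* Let $j\ge3$ and $n\ge j-2$ be integers. (i) If $n\ge 2j-2$, then there exists $\tilde\lambda\in(1/n,n)$ with the following properties: - $\lambda_{n,j}(\lambda)>1/n$ for all $\lambda\in(1/n,\tilde\lambda)$; - $\lambda_{n,j}(\lambda)=1/n$ for $\lambda\in\{1/n,\tilde\lambda\}$; - $\lambda_{n,j}(\lambda)<1/n$ for all $\lambda\in(\tilde\lambda,\infty]$. (ii) If $n\le 2j-3$, then $\lambda_{n,j}(\lambda)<1/n$ for all $\lambda\in(1/n,\infty]$.
   Context: For an integer $n\ge1$ let $f_n(x)=(1+x)^{n+1}/x$ for $x>0$. The function $f_n$ is strictly decreasing on $(0,1/n]$ and strictly increasing on $[1/n,\infty)$. Regular graph exponents (Schmidt–Summerer), defined algebraically. For $\lambda\in[1/n,\infty)$ let $\mu\in(0,1/n]$ be the unique solution of $f_n(\mu)=f_n(\lambda)$, and set $$\lambda_{n,j}(\lambda)=\lambda^{1-\frac{j-1}{n+1}}\mu^{\frac{j-1}{n+1}},\qquad 1\le j\le n+2 .$$ All ratios $\lambda_{n,j}/\lambda_{n,j+1}$ are equal. For $\lambda=\infty$ put $\lambda_{n,1}=\infty$, $\lambda_{n,2}=1$ and $\lambda_{n,j}=0$ for $3\le j\le n+2$. These are the exponents $\lambda_{n,j}$ of the regular graph in dimension $n$ with parameter $\lambda_n=\lambda$. They depend continuously on $\lambda$. *)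

(* Defs.v *)
From Stdlib Require Import Reals ClassicalEpsilon.
Open Scope R_scope.

Definition f (n : nat) (x : R) : R := (1 + x) ^ (n + 1) / x.

(* mu(lambda): the (unique) solution mu in (0,1/n] of f_n(mu) = f_n(lambda).
   Chosen by Hilbert's epsilon; existence and uniqueness are facts about f_n. *)
Definition mu_of (n : nat) (lam : R) : R :=
  epsilon (inhabits 0) (fun m => 0 < m <= / INR n /\ f n m = f n lam).

Inductive Rbar : Type := Fin (x : R) | PInf.

Definition Rbar_lt (a b : Rbar) : Prop :=
  match a, b with
  | Fin x, Fin y => x < y
  | Fin _, PInf => True
  | PInf, _ => False
  end.

Definition lambda_nj (n j : nat) (x : Rbar) : Rbar :=
  match x with
  | Fin lam =>
      let e := (INR j - 1) / (INR n + 1) in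
      Fin (Rpower lam (1 - e) * Rpower (mu_of n lam) e)
  | PInf =>
      if Nat.eqb j 1 then PInf else if Nat.eqb j 2 then Fin 1 else Fin 0
  end.

(* Main.v *)
Require Import Defs.
From Stdlib Require Import Reals Lra Lia Psatz ClassicalEpsilon.
Import Defs.
Open Scope R_scope.

Fixpoint G (n : nat) (s : R) : R :=
  match n with O => 0 | S m => G m s + s ^ m end.

Lemma G_geom n s : (1 - s) * G n s = 1 - s ^ n.
Proof. induction n; simpl; [ring|]. rewrite Rmult_plus_distr_l, IHn. ring. Qed.

Lemma G_shift n s : s * G n s = G (S n) s - 1.
Proof. induction n; simpl; [ring|]. simpl in IHn. nra. Qed.

Lemma G_nonneg n s : 0 <= s -> 0 <= G n s.
Proof. intro. induction n; simpl; [lra|]. pose proof (pow_le s n H). lra. Qed.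

Lemma G_ge1 n s : 0 <= s -> (1 <= n)%nat -> 1 <= G n s.
Proof. intros Hs Hn. induction n; [lia|]. simpl. destruct n.
  simpl. lra. pose proof (pow_le s (S n) Hs). assert (1 <= S n)%nat by lia. specialize (IHn H0). lra. Qed.

Lemma G_mono n a b : 0 <= a <= b -> G n a <= G n b.
Proof. intro H. induction n; simpl; [lra|]. pose proof (pow_incr a b n H). lra. Qed.

Lemma pow_le1 s m : 0 <= s <= 1 -> s ^ m <= 1.
Proof. intro. induction m; simpl; [lra|]. pose proof (pow_le s m ltac:(lra)). nra. Qed.

Lemma pow_lt1 s m : 0 <= s < 1 -> (1 <= m)%nat -> s ^ m < 1.
Proof. intros. apply pow_lt_1_compat; auto; lia. Qed.

Lemma pow_anti s m d : 0 <= s <= 1 -> s ^ (m + d) <= s ^ m.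
Proof. intro. rewrite pow_add. pose proof (pow_le s m ltac:(lra)). pose proof (pow_le1 s d H). nra. Qed.

Lemma pow_anti' s m m' : 0 <= s <= 1 -> (m <= m')%nat -> s ^ m' <= s ^ m.
Proof. intros. replace m' with (m + (m' - m))%nat by lia. apply pow_anti; auto. Qed.

Lemma pow_santi s m m' : 0 < s < 1 -> (m < m')%nat -> s ^ m' < s ^ m.
Proof. intros. replace m' with (m + (m' - m))%nat by lia. rewrite pow_add.
  pose proof (pow_lt s m ltac:(lra)). pose proof (pow_lt1 s (m'-m) ltac:(lra) ltac:(lia)). nra. Qed.

Lemma G_le n s : 0 <= s <= 1 -> G n s <= INR n.
Proof. intro. induction n; simpl G; [simpl; lra|]. rewrite S_INR. pose proof (pow_le1 s n H). lra. Qed.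

Lemma T_lt n s : 0 <= s < 1 -> (1 <= n)%nat -> s * G n s < INR n.
Proof. intros. rewrite G_shift. simpl G.
  pose proof (G_le n s ltac:(lra)). pose proof (pow_lt1 s n H H0). lra. Qed.

Lemma G_cont n : continuity (fun s => G n s).
Proof. apply derivable_continuous. induction n; simpl.
  - apply derivable_const.
  - change (derivable ((fun s => G n s) + (fun s => s ^ n))%F). apply derivable_plus; auto. apply derivable_pow. Qed.

Lemma G_rec2 m s : G (S (S m)) s = s * G m s + 1 + s ^ (S m).
Proof. rewrite G_shift. simpl. ring. Qed.

Lemma step_bound m k s : 0 < s < 1 -> (m <= 2 * k + 1)%nat ->
  (1 - s ^ (S k)) ^ 2 <= 1 + s ^ (S m) - 2 * s ^ (S k).
Proof. intros Hs Hm.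
  assert (s ^ (S k + S k) <= s ^ (S m)) by (apply pow_anti'; [lra|lia]).
  rewrite pow_add in H. nra. Qed.

Lemma G_ge_nonstrict k : forall n s, 0 < s < 1 -> (n <= 2 * k + 1)%nat -> INR n * s ^ k <= G n s.
Proof. induction k; intros n s Hs Hn.
  - destruct n as [|[|n]]; [simpl; lra| simpl; lra | lia].
  - destruct n as [|[|m]].
    + simpl; lra.
    + simpl. pose proof (pow_le1 s k ltac:(lra)). pose proof (pow_le s k ltac:(lra)). nra.
    + rewrite G_rec2. specialize (IHk m s Hs ltac:(lia)).
      pose proof (step_bound m k s Hs ltac:(lia)).
      assert (0 <= s * (G m s - INR m * s ^ k)) by (apply Rmult_le_pos; lra).
      assert (0 <= (1 - s ^ (S k)) ^ 2) by (apply pow2_ge_0).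
      rewrite !S_INR. simpl pow in *. nra.
Qed.

Lemma G_gt_strict k n s : 0 < s < 1 -> (1 <= n)%nat -> (n <= 2 * k + 3)%nat -> INR n * s ^ (S k) < G n s.
Proof. intros Hs H1 Hn. destruct n as [|[|m]].
  - lia.
  - simpl. pose proof (pow_lt1 s (S k) ltac:(lra) ltac:(lia)). simpl in H. lra.
  - rewrite G_rec2. pose proof (G_ge_nonstrict k m s Hs ltac:(lia)).
    pose proof (step_bound m k s Hs ltac:(lia)).
    pose proof (pow_lt1 s (S k) ltac:(lra) ltac:(lia)).
    assert (0 < (1 - s ^ S k) ^ 2) by (apply pow_lt; lra).
    assert (0 <= s * (G m s - INR m * s ^ k)) by (apply Rmult_le_pos; lra).
    rewrite !S_INR. simpl pow in *. nra.
Qed.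


Definition dd a b m := (1-b) * a^m + (b-a) - (1-a) * b^m.
Definition ee a b p := (1-b) * b^p + (b-a) * (b*a)^p - (1-a) * a^p.

Lemma dd_nonneg a b (Hab : 0 < a < b) (Hb1 : b < 1) m : 0 <= dd a b m.
Proof. induction m.
  - unfold dd; simpl; lra.
  - assert (dd a b (S m) = dd a b m + (1-b)*(1-a)*(b^m - a^m)) by (unfold dd; simpl; ring).
    rewrite H. pose proof (pow_incr a b m ltac:(lra)).
    assert (0 <= (1-b)*(1-a)) by nra. nra. Qed.

Lemma ee_pos a b (Hab : 0 < a < b) (Hb1 : b < 1) p : 0 <= ee a b p /\ ((1 <= p)%nat -> 0 < ee a b p).
Proof. induction p.
  - split; [unfold ee; simpl; lra| lia].
  - assert (ee a b (S p) = b * ee a b p + (b-a)*(1-a)*a^p*(1-b^(S p))) by (unfold ee; rewrite !Rpow_mult_distr; simpl; ring).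
    rewrite H. destruct IHp as [IH _].
    pose proof (pow_lt a p ltac:(lra)).
    pose proof (pow_lt1 b (S p) ltac:(lra) ltac:(lia)).
    assert (0 < (b-a)*(1-a)*a^p*(1-b^(S p))).
    { repeat apply Rmult_lt_0_compat; lra. }
    assert (0 <= b * ee a b p) by (apply Rmult_le_pos; lra).
    split; [lra| intros; lra]. Qed.

Definition cc a b k i := (1-b) * a^i * b^k + (b-a) * b^k * a^k - (1-a) * b^i * a^k.

Lemma cc_nonneg a b (Hab : 0 < a < b) (Hb1 : b < 1) k i : 0 <= cc a b k i.
Proof. destruct (Nat.le_gt_cases k i).
  - destruct (Nat.le_exists_sub k i H) as [m [-> _]]. rewrite Nat.add_comm.
    assert (cc a b k (k + m) = a^k * b^k * dd a b m) by (unfold cc, dd; rewrite !pow_add; ring).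
    rewrite H0. pose proof (dd_nonneg a b Hab Hb1 m). pose proof (pow_lt a k ltac:(lra)). pose proof (pow_lt b k ltac:(lra)).
    apply Rmult_le_pos; [|lra]. nra.
  - destruct (Nat.le_exists_sub i k ltac:(lia)) as [p [Hp _]].
    assert (cc a b k i = a^i * b^i * ee a b p).
    { unfold cc, ee. rewrite Hp, !pow_add, Rpow_mult_distr. ring. }
    rewrite H0. destruct (ee_pos a b Hab Hb1 p). pose proof (pow_lt a i ltac:(lra)). pose proof (pow_lt b i ltac:(lra)).
    apply Rmult_le_pos; [|lra]. nra. Qed.

Definition CC a b k n := (1-b) * b^k * G n a + INR n * (b-a) * b^k * a^k - (1-a) * a^k * G n b.

Lemma CC_pos a b (Hab : 0 < a < b) (Hb1 : b < 1) k n : (1 <= k)%nat -> 0 < CC a b k (S n).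
Proof. intro Hk. assert (0 < cc a b k 0).
  { assert (cc a b k 0 = ee a b k) by (unfold cc, ee; rewrite Rpow_mult_distr; simpl; ring).
    rewrite H. apply (ee_pos a b Hab Hb1). auto. }
  assert (forall n, CC a b k (S n) = CC a b k n + cc a b k n).
  { intro m. unfold CC, cc. simpl G. rewrite S_INR. ring. }
  induction n.
  - rewrite H0. unfold CC. simpl. lra.
  - rewrite H0. pose proof (cc_nonneg a b Hab Hb1 k (S n)). lra. Qed.

Lemma crossing a b (Hab : 0 < a < b) (Hb1 : b < 1) k n : (1 <= k)%nat -> (1 <= n)%nat -> G n a <= INR n * a ^ k -> G n b < INR n * b ^ k.
Proof. intros Hk Hn H. destruct n; [lia|]. pose proof (CC_pos a b Hab Hb1 k n Hk). unfold CC in H0.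
  set (N := INR (S n)) in *.
  pose proof (pow_lt a k ltac:(lra)). pose proof (pow_lt b k ltac:(lra)).
  assert ((1-b)*b^k*G (S n) a <= (1-b)*b^k*(N * a^k)).
  { apply Rmult_le_compat_l; [|lra]. nra. }
  assert ((1-a)*a^k*G (S n) b < (1-a)*a^k*(N*b^k)) by nra.
  apply Rmult_lt_reg_l in H4; [lra|]. nra. Qed.

Lemma bernoulli s m : 0 <= s -> 1 - INR m * (1 - s) <= s ^ m.
Proof. intro Hs. induction m.
  - simpl. lra.
  - rewrite S_INR. simpl. assert (0 <= INR m) by apply pos_INR.
    assert (s * (1 - INR m * (1 - s)) <= s * s^m) by (apply Rmult_le_compat_l; lra).
    assert (0 <= INR m * (1-s)^2) by (apply Rmult_le_pos; [lra| apply pow2_ge_0]). nra. Qed.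

Lemma G_upper2 m s : 0 <= s <= 1 -> G (S (S m)) s <= INR m + 1 + s.
Proof. intro Hs. induction m.
  - simpl. lra.
  - change (G (S (S (S m))) s) with (G (S (S m)) s + s ^ (S (S m))).
    pose proof (pow_le1 s (S (S m)) Hs). rewrite S_INR. lra. Qed.

Lemma E_bound k : forall n s, 0 < s < 1 -> (2 * k + 2 <= n)%nat ->
  G n s - INR n * s ^ k <= - (1 - s) * s ^ k + INR k ^ 3 * (1 - s) ^ 2.
Proof. induction k; intros n s Hs Hn.
  - destruct n as [|[|m]]; [lia|lia|]. pose proof (G_upper2 m s ltac:(lra)).
    rewrite !S_INR, !pow_O. change (INR 0) with 0. lra.
  - destruct n as [|[|m]]; [lia|lia|]. rewrite G_rec2.
    specialize (IHk m s Hs ltac:(lia)).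
    assert (s ^ (S m) <= s ^ (S k + S k)) by (apply pow_anti'; [lra|lia]).
    rewrite pow_add in H.
    pose proof (bernoulli s (S k) ltac:(lra)).
    pose proof (pow_lt1 s (S k) ltac:(lra) ltac:(lia)).
    assert ((1 - s^(S k))^2 <= (INR (S k) * (1-s))^2).
    { apply pow_incr. lra. }
    assert (s * (G m s - INR m * s ^ k) <= s * (- (1 - s) * s ^ k + INR k ^ 3 * (1 - s) ^ 2))
      by (apply Rmult_le_compat_l; lra).
    assert (0 <= INR k) by apply pos_INR.
    assert (s * (INR k ^ 3 * (1 - s) ^ 2) <= INR k ^ 3 * (1 - s) ^ 2).
    { assert (0 <= INR k ^ 3 * (1 - s) ^ 2) by (apply Rmult_le_pos; [apply pow_le; lra| apply pow2_ge_0]). nra. }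
    assert (INR k ^ 3 * (1 - s) ^ 2 + (INR (S k) * (1-s))^2 <= INR (S k) ^ 3 * (1 - s) ^ 2).
    { rewrite S_INR. assert (0 <= (1-s)^2) by apply pow2_ge_0.
      assert (0 <= (INR k + INR k ^ 2 + INR k ^ 2) * (1-s)^2) by (apply Rmult_le_pos; nra). nra. }
    rewrite !S_INR in *. simpl pow in *. nra.
Qed.

Lemma neg_point k n : (1 <= k)%nat -> (2 * k + 2 <= n)%nat ->
  exists s, 1/2 < s < 1 /\ G n s < INR n * s ^ k.
Proof. intros Hk Hn. set (r := INR k). assert (1 <= r) by (apply (le_INR 1); auto).
  set (K := r ^ 3 + r + 1). assert (3 <= K) by (unfold K; nra).
  exists (1 - / K). assert (0 < / K <= /3) by (split; [apply Rinv_0_lt_compat; lra| apply Rinv_le_contravar; lra]).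
  split; [lra|]. set (s := 1 - / K).
  pose proof (E_bound k n s ltac:(unfold s; lra) Hn) as E1.
  pose proof (bernoulli s k ltac:(unfold s; lra)) as E2. fold r in E1, E2.
  assert (E3 : 1 - s = / K) by (unfold s; ring).
  rewrite E3 in E1, E2.
  assert (r ^ 3 * / K - s ^ k < 0).
  { assert (r ^ 3 * / K + r * / K = 1 - / K) by (replace (r^3) with (K - r - 1) by (unfold K; ring); field; lra).
    set (t := / K) in *. set (u := s ^ k) in *. lra. }
  assert (0 < /K * -(r ^ 3 * / K - s ^ k)) by (apply Rmult_lt_0_compat; lra).
  assert (- / K * s ^ k + r ^ 3 * (/ K) ^ 2 = / K * (r ^ 3 * / K - s ^ k)) by ring.
  lra.
Qed.

Lemma f_pair n a b : (1 <= n)%nat -> 0 < a < b -> f n a = f n b ->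
  exists s, 0 < s < 1 /\ a = s ^ (S n) * b /\ b * (s * G n s) = 1.
Proof. intros Hn Hab Hf. unfold f in Hf. rewrite Nat.add_1_r in Hf.
  set (s := (1 + a) / (1 + b)). exists s.
  assert (Hs : s * (1 + b) = 1 + a) by (unfold s; field; lra).
  assert (0 < s < 1).
  { split. unfold s; apply Rdiv_lt_0_compat; lra. apply Rmult_lt_reg_r with (1 + b); [lra|]. rewrite Hs. lra. }
  assert (Hp : 0 < (1 + b) ^ S n) by (apply pow_lt; lra).
  assert (E : (1 + a) ^ S n * b = (1 + b) ^ S n * a).
  { apply (Rmult_eq_reg_r (/ a * / b)). 2: { apply Rmult_integral_contrapositive; split; apply Rinv_neq_0_compat; lra. }
    replace ((1 + a) ^ S n * b * (/ a * / b)) with ((1 + a) ^ S n / a) by (field; lra).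
    replace ((1 + b) ^ S n * a * (/ a * / b)) with ((1 + b) ^ S n / b) by (field; lra). exact Hf. }
  rewrite <- Hs, Rpow_mult_distr in E.
  assert (Ha : a = s ^ S n * b).
  { apply (Rmult_eq_reg_l ((1 + b) ^ S n)); [|lra]. rewrite <- E. ring. }
  split; [auto|]. split; [auto|].
  pose proof (G_geom n s).
  assert (b * (1 - s) * (s * G n s) = b * s * (1 - s ^ n)) by (rewrite <- H0; ring).
  assert (b * s * (1 - s ^ n) = 1 - s).
  { rewrite Ha in Hs. simpl in Hs. replace (s ^ n) with (s ^ n) by auto. nra. }
  apply (Rmult_eq_reg_l (1 - s)); [|lra]. nra.
Qed.

Lemma mu_unique n m1 m2 : (1 <= n)%nat -> 0 < m1 <= / INR n -> 0 < m2 <= / INR n ->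
  f n m1 = f n m2 -> m1 = m2.
Proof. intros Hn H1 H2 Hf.
  assert (Hn' : 1 <= INR n) by (apply (le_INR 1); auto).
  assert (forall a b, 0 < a < b -> b <= / INR n -> f n a = f n b -> False).
  { intros a b Hab Hb Hfab. destruct (f_pair n a b Hn Hab Hfab) as [s [Hs [_ Hb1]]].
    pose proof (T_lt n s ltac:(lra) Hn).
    assert (0 < s * G n s) by (pose proof (G_ge1 n s ltac:(lra) Hn); nra).
    assert (b * INR n <= 1).
    { apply (Rmult_le_reg_r (/ INR n)). apply Rinv_0_lt_compat; lra.
      rewrite Rmult_assoc, Rinv_r, Rmult_1_r, Rmult_1_l; lra. }
    nra. }
  destruct (Rtotal_order m1 m2) as [Hl|[He|Hg]]; auto.
  - exfalso. apply (H m1 m2); auto; lra.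
  - exfalso. apply (H m2 m1); auto; lra.
Qed.

Lemma mu_of_spec n lam m : (1 <= n)%nat -> 0 < m <= / INR n -> f n m = f n lam -> mu_of n lam = m.
Proof. intros Hn Hm Hf. unfold mu_of.
  pose proof (epsilon_spec (inhabits 0) (fun m => 0 < m <= / INR n /\ f n m = f n lam) (ex_intro _ m (conj Hm Hf))) as [H1 H2].
  apply mu_unique with n; auto. rewrite H2; auto.
Qed.

Lemma G_one n : G n 1 = INR n.
Proof. induction n. reflexivity. simpl G. rewrite IHn, pow1, S_INR. reflexivity. Qed.

Lemma s_exists n lam : (1 <= n)%nat -> / INR n < lam -> exists s, 0 < s < 1 /\ lam * (s * G n s) = 1.
Proof. intros Hn Hl.
  assert (Hn' : 1 <= INR n) by (apply (le_INR 1); auto).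
  assert (0 < lam) by (pose proof (Rinv_0_lt_compat (INR n) ltac:(lra)); lra).
  assert (/ lam < INR n).
  { replace (INR n) with (/ / INR n) by (field; lra). apply Rinv_lt_contravar; auto.
    apply Rmult_lt_0_compat; auto. apply Rinv_0_lt_compat; lra. }
  assert (0 < / lam) by (apply Rinv_0_lt_compat; lra).
  assert (Hc : continuity (fun s => s * G n s - / lam)).
  { apply continuity_minus. apply continuity_mult. apply derivable_continuous, derivable_id. apply G_cont.
    apply continuity_const. intros x y; auto. }
  destruct (IVT (fun s => s * G n s - / lam) 0 1 Hc ltac:(lra)) as [z [Hz Hz2]].
  - simpl. lra.
  - simpl. pose proof (G_le n 1 ltac:(lra)).
    assert (G n 1 = INR n) by apply G_one.
    lra.
  - exists z. simpl in Hz2. split.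
    + split. destruct (Req_dec z 0). subst. lra. lra.
      destruct (Req_dec z 1). subst. assert (G n 1 = INR n) by apply G_one.
      lra. lra.
    + assert (Ez : z * G n z = / lam) by lra. rewrite Ez. field. lra.
Qed.

Lemma mu_of_s n lam s : (1 <= n)%nat -> 0 < s < 1 -> lam * (s * G n s) = 1 ->
  mu_of n lam = s ^ (S n) * lam.
Proof. intros Hn Hs Hl.
  assert (Hn' : 1 <= INR n) by (apply (le_INR 1); auto).
  pose proof (G_ge1 n s ltac:(lra) Hn) as HG.
  assert (HT : 0 < s * G n s) by nra.
  assert (Hlam : 0 < lam) by (destruct (Rlt_or_le 0 lam); auto; nra).
  pose proof (pow_lt s n ltac:(lra)) as Hsn.
  apply mu_of_spec; auto.
  - split. simpl. apply Rmult_lt_0_compat; [|lra]. apply Rmult_lt_0_compat; lra.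
    pose proof (G_ge_nonstrict n n s Hs ltac:(lia)).
    assert (s ^ S n * lam * INR n <= 1).
    { simpl. replace (s * s ^ n * lam * INR n) with ((INR n * s ^ n) * (s * lam)) by ring.
      assert (0 < s * lam) by nra.
      assert (INR n * s ^ n * (s * lam) <= G n s * (s * lam)) by (apply Rmult_le_compat_r; lra).
      lra. }
    apply (Rmult_le_reg_r (INR n)); [lra|]. rewrite Rinv_l; lra.
  - assert (E : 1 + s ^ S n * lam = s * (1 + lam)).
    { pose proof (G_geom n s). simpl.
      assert (s * lam * (1 - s ^ n) = 1 - s) by (rewrite <- H; replace (s*lam*((1-s)*G n s)) with ((1-s)*(lam*(s*G n s))) by ring; rewrite Hl; ring). nra. }
    unfold f. rewrite E, Rpow_mult_distr. rewrite Nat.add_1_r. field. split; [lra|]. apply pow_nonzero; lra.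
Qed.

Lemma value_s n k lam s : (1 <= n)%nat -> 0 < s < 1 -> lam * (s * G n s) = 1 ->
  lambda_nj n (S (S k)) (Fin lam) = Fin (s ^ k / G n s).
Proof. intros Hn Hs Hl.
  pose proof (G_ge1 n s ltac:(lra) Hn) as HG.
  assert (HT : 0 < s * G n s) by nra.
  assert (Hlam : 0 < lam) by (destruct (Rlt_or_le 0 lam); auto; nra).
  unfold lambda_nj. rewrite (mu_of_s n lam s Hn Hs Hl). f_equal.
  set (e := (INR (S (S k)) - 1) / (INR n + 1)).
  rewrite <- Rpower_mult_distr by (try apply pow_lt; lra).
  rewrite Rmult_comm, Rmult_assoc, <- Rpower_plus.
  replace (e + (1 - e)) with 1 by ring. rewrite Rpower_1 by lra.
  rewrite <- (Rpower_pow (S n) s) by lra. rewrite Rpower_mult.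
  replace (INR (S n) * e) with (INR (S k)).
  2: { unfold e. rewrite !S_INR. field. pose proof (pos_INR n). lra. }
  rewrite Rpower_pow by lra. simpl.
  field_simplify_eq; [|lra]. replace (s * s ^ k * lam * G n s) with (s ^ k * (lam * (s * G n s))) by ring.
  rewrite Hl. ring.
Qed.

Lemma value_inv n j : (1 <= n)%nat -> lambda_nj n j (Fin (/ INR n)) = Fin (/ INR n).
Proof. intros Hn. assert (Hn' : 1 <= INR n) by (apply (le_INR 1); auto).
  assert (0 < / INR n) by (apply Rinv_0_lt_compat; lra).
  unfold lambda_nj. rewrite (mu_of_spec n (/ INR n) (/ INR n) Hn ltac:(lra) eq_refl).
  f_equal. rewrite <- Rpower_plus. replace (_ + _) with 1 by ring. apply Rpower_1; auto.
Qed.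

Lemma G_ge_1s n s : (2 <= n)%nat -> 0 <= s -> 1 + s <= G n s.
Proof. intros Hn Hs. induction n; [lia|]. destruct n as [|n]; [lia|]. destruct n as [|n].
  - simpl. lra.
  - change (G (S (S (S n))) s) with (G (S (S n)) s + s ^ (S (S n))).
    pose proof (pow_le s (S (S n)) Hs). specialize (IHn ltac:(lia)). lra. Qed.

Lemma T_mono n a b : (1 <= n)%nat -> 0 <= a <= b -> a * G n a <= b * G n b.
Proof. intros. pose proof (G_mono n a b H0). pose proof (G_nonneg n a ltac:(lra)).
  apply Rmult_le_compat; lra. Qed.

Lemma cmp_lt n k s : (1 <= n)%nat -> 0 < s < 1 -> INR n * s ^ k < G n s -> s ^ k / G n s < / INR n.
Proof. intros Hn Hs H. assert (Hn' : 1 <= INR n) by (apply (le_INR 1); auto).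
  pose proof (G_ge1 n s ltac:(lra) Hn).
  apply (Rmult_lt_reg_r (INR n * G n s)); [nra|].
  replace (s ^ k / G n s * (INR n * G n s)) with (INR n * s ^ k) by (field; lra).
  replace (/ INR n * (INR n * G n s)) with (G n s) by (field; lra). lra. Qed.

Lemma cmp_gt n k s : (1 <= n)%nat -> 0 < s < 1 -> G n s < INR n * s ^ k -> / INR n < s ^ k / G n s.
Proof. intros Hn Hs H. assert (Hn' : 1 <= INR n) by (apply (le_INR 1); auto).
  pose proof (G_ge1 n s ltac:(lra) Hn).
  apply (Rmult_lt_reg_r (INR n * G n s)); [nra|].
  replace (s ^ k / G n s * (INR n * G n s)) with (INR n * s ^ k) by (field; lra).
  replace (/ INR n * (INR n * G n s)) with (G n s) by (field; lra). lra. Qed.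

Theorem theorem2p5 (n j : nat) (hj : (3 <= j)%nat) (hn : (j - 2 <= n)%nat) :
  ((2 * j - 2 <= n)%nat ->
     exists lt : R,
       / INR n < lt < INR n /\
       (forall l : R, / INR n < l < lt ->
          Rbar_lt (Fin (/ INR n)) (lambda_nj n j (Fin l))) /\
       lambda_nj n j (Fin (/ INR n)) = Fin (/ INR n) /\
       lambda_nj n j (Fin lt) = Fin (/ INR n) /\
       (forall x : Rbar, Rbar_lt (Fin lt) x ->
          Rbar_lt (lambda_nj n j x) (Fin (/ INR n)))) /\
  ((n <= 2 * j - 3)%nat ->
     forall x : Rbar, Rbar_lt (Fin (/ INR n)) x ->
       Rbar_lt (lambda_nj n j x) (Fin (/ INR n))).
Proof.
  destruct j as [|[|k]]; try lia.
  assert (Hk : (1 <= k)%nat) by lia.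
  assert (Hn : (1 <= n)%nat) by lia.
  assert (Hn' : 1 <= INR n) by (apply (le_INR 1); auto).
  assert (Hinv : 0 < / INR n) by (apply Rinv_0_lt_compat; lra).
  assert (PI : Rbar_lt (lambda_nj n (S (S k)) PInf) (Fin (/ INR n))).
  { simpl. destruct k; [lia|]. simpl. lra. }
  split.
  - intro H2.
    destruct (neg_point k n Hk ltac:(lia)) as [b [Hb Hbneg]].
    set (a := / (2 * INR n)).
    assert (Ha : 0 < a <= / 2).
    { unfold a. split. apply Rinv_0_lt_compat; lra. apply Rinv_le_contravar; lra. }
    assert (Hapos : 0 < G n a - INR n * a ^ k).
    { pose proof (G_ge1 n a ltac:(lra) Hn).
      pose proof (pow_anti' a 1 k ltac:(lra) Hk). rewrite pow_1 in H0.
      assert (INR n * a = / 2) by (unfold a; field; lra).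
      assert (INR n * a ^ k <= INR n * a) by (apply Rmult_le_compat_l; lra). lra. }
    assert (Hc : continuity (fun s => INR n * s ^ k - G n s)).
    { apply continuity_minus. apply continuity_mult. apply continuity_const. intros x y; auto.
      apply derivable_continuous, derivable_pow. apply G_cont. }
    destruct (IVT (fun s => INR n * s ^ k - G n s) a b Hc ltac:(lra) ltac:(simpl; lra) ltac:(simpl; lra))
      as [z [Hz Hz0]]. simpl in Hz0.
    assert (Hz1 : 0 < z < 1) by lra.
    assert (HGz : G n z = INR n * z ^ k) by lra.
    pose proof (G_ge1 n z ltac:(lra) Hn) as HG1.
    assert (HTz : 0 < z * G n z) by nra.
    set (lt := / (z * G n z)).
    assert (Hlt : lt * (z * G n z) = 1) by (unfold lt; field; lra).
    exists lt. split; [|split; [|split; [|split]]].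
    + split.
      * unfold lt. apply Rinv_lt_contravar. nra. apply T_lt; auto; lra.
      * assert (/ INR n < z * G n z).
        { pose proof (G_ge_1s n z ltac:(lia) ltac:(lra)).
          pose proof (pow_anti' z 1 k ltac:(lra) Hk). rewrite pow_1 in H0.
          assert (/ INR n <= z ^ k).
          { apply (Rmult_le_reg_l (INR n)); [lra|]. rewrite Rinv_r by lra. lra. }
          nra. }
        unfold lt. rewrite <- (Rinv_inv (INR n)).
        apply Rinv_lt_contravar; auto. nra.
    + intros l [Hl1 Hl2].
      destruct (s_exists n l Hn Hl1) as [s [Hs Hls]].
      rewrite (value_s n k l s Hn Hs Hls). simpl.
      assert (z < s).
      { destruct (Rlt_or_le z s); auto. exfalso.
        pose proof (T_mono n s z Hn ltac:(lra)).
        assert (0 < l) by lra.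
        assert (l * (s * G n s) <= l * (z * G n z)) by (apply Rmult_le_compat_l; lra).
        assert (l * (z * G n z) < lt * (z * G n z)) by (apply Rmult_lt_compat_r; lra). lra. }
      apply cmp_gt; auto. apply (crossing z s); auto; lra.
    + apply value_inv; auto.
    + rewrite (value_s n k lt z Hn Hz1 Hlt). f_equal. rewrite HGz. field.
      split; [lra|]. apply pow_nonzero; lra.
    + intros [l|] Hx; [|exact PI]. simpl in Hx.
      assert (Hl1 : / INR n < l).
      { assert (/ INR n < lt); [|lra].
        unfold lt. apply Rinv_lt_contravar. nra. apply T_lt; auto; lra. }
      destruct (s_exists n l Hn Hl1) as [s [Hs Hls]].
      rewrite (value_s n k l s Hn Hs Hls). simpl.
      assert (s < z).
      { destruct (Rlt_or_le s z); auto. exfalso.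
        pose proof (T_mono n z s Hn ltac:(lra)).
        assert (0 < l) by lra.
        assert (l * (z * G n z) <= l * (s * G n s)) by (apply Rmult_le_compat_l; lra).
        assert (lt * (z * G n z) < l * (z * G n z)) by (apply Rmult_lt_compat_r; lra). lra. }
      apply cmp_lt; auto.
      destruct (Rlt_or_le (INR n * s ^ k) (G n s)); auto. exfalso.
      pose proof (crossing s z ltac:(lra) ltac:(lra) k n Hk Hn H0). lra.
  - intros H2 [l|] Hx; [|exact PI]. simpl in Hx.
    destruct (s_exists n l Hn Hx) as [s [Hs Hls]].
    rewrite (value_s n k l s Hn Hs Hls). simpl.
    apply cmp_lt; auto.
    destruct k as [|k']; [lia|]. apply G_gt_strict; auto; lia.
Qed.
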